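(* There exist pairs of measurement channels $\Phi_M,\Phi_N$ corresponding to commuting $2$-outcome POVMs ($[M_0,N_0]=[M_1,N_1]=0$) that form a Maximal Entanglement Best Case pair. For instance, $M_0=\begin{pmatrix}0.9&0\\0&0.6\end{pmatrix}$, $M_1=I-M_0$, $N_0=\begin{pmatrix}0.5&0\\0&0.2\end{pmatrix}$, $N_1=I-N_0$, for which $M_0-N_0=0.4\,I_2$, give a MEBC pair.
   Context: The measurement channel of a POVM $M$ is $\Phi_M(\rho)=\sum_i\operatorname{Tr}(\rho M_i)\,|i\rangle\langle i|$. With $\Delta_\Phi=\Phi_M-\Phi_N$, Choi operator $J(\mathcal{S})=\sum_{ij}\mathcal{S}(|i\rangle\langle j|)\otimes|i\rangle\langle j|$, input dimension $d$, ME-norm $\|\mathcal{S}\|_{\mathrm{ME}}=\|J(\mathcal{S})/d\|_1$ and diamond norm $\|\mathcal{S}\|_\diamond=\max_{\rho_{AA'}}\|(\mathcal{S}\otimes I_{A'})\rho_{AA'}\|_1$, the pair is Maximal Entanglement Best Case (MEBC) if $\|\Delta_\Phi\|_{\mathrm{ME}}=\|\Delta_\Phi\|_\diamond$, i.e. a maximally entangled input state is optimal for discriminating the two channels with uniform priors. *)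

(* Defs.v *)
From HB Require Import structures.
From mathcomp Require Import all_boot all_order all_algebra.
From mathcomp Require Import complex mxtens reals classical_sets.
Set Implicit Arguments. Unset Strict Implicit. Unset Printing Implicit Defensive.
Import Order.TTheory GRing.Theory Num.Theory.
Local Open Scope ring_scope.

Section QI.
Variable R : realType.
Local Notation C := R[i].

Definition adj m n (X : 'M[C]_(m, n)) : 'M[C]_(n, m) := map_mx Num.conj (X^T).

Definition psd n (A : 'M[C]_n) : Prop :=
  adj A = A /\ forall v : 'cV[C]_n, 0 <= (adj v *m A *m v) 0 0.

Definition density n (rho : 'M[C]_n) : Prop := psd rho /\ \tr rho = 1.

Definition povm k d (M : 'I_k -> 'M[C]_d) : Prop :=
  (forall i, psd (M i)) /\ \sum_(i < k) M i = 1%:M.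

(* trace norm ||X||_1 = Tr sqrt(X^dagger X) = sum of the square roots of the
   eigenvalues of X^dagger X (spectral_diag: eigenvalues of the diagonalisation) *)
Definition trace_norm m n (X : 'M[C]_(m, n)) : C :=
  \sum_(i < n) sqrtC (spectral_diag (adj X *m X) 0 i).

Definition meas_channel k d (M : 'I_k -> 'M[C]_d) (rho : 'M[C]_d) : 'M[C]_k :=
  diag_mx (\row_(i < k) \tr (rho *m M i)).

Definition choi d k (S : 'M[C]_d -> 'M[C]_k) : 'M[C]_(k * d) :=
  \sum_(i < d) \sum_(j < d) tensmx (S (delta_mx i j)) (delta_mx i j : 'M[C]_d).

Definition me_norm d k (S : 'M[C]_d -> 'M[C]_k) : C :=
  trace_norm ((d%:R)^-1 *: choi S).

(* block (i,j) of an operator rho on A (x) A' (both of dimension d) w.r.t. A,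
   so that rho = sum_ij |i><j| (x) rho_ij *)
Definition block d (rho : 'M[C]_(d * d)) (i j : 'I_d) : 'M[C]_d :=
  \matrix_(a, b) rho (mxtens_index (i, a)) (mxtens_index (j, b)).

(* (S (x) id_A') rho, A' a copy of A *)
Definition ext_id d k (S : 'M[C]_d -> 'M[C]_k) (rho : 'M[C]_(d * d))
  : 'M[C]_(k * d) :=
  \sum_(i < d) \sum_(j < d) tensmx (S (delta_mx i j)) (block rho i j).

(* diamond norm: max over density operators rho_AA' of ||(S (x) id) rho||_1
   (the max, which is attained, is written as a supremum) *)
Definition diamond_norm d k (S : 'M[C]_d -> 'M[C]_k) : R :=
  sup [set x : R | exists rho : 'M[C]_(d * d),
        density rho /\ Complex x 0 = trace_norm (ext_id S rho)].

Definition MEBC k d (M N : 'I_k -> 'M[C]_d) : Prop :=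
  let Delta := fun rho => meas_channel M rho - meas_channel N rho in
  me_norm Delta = Complex (diamond_norm Delta) 0.

Definition povm2 d (P0 : 'M[C]_d) : 'I_2 -> 'M[C]_d :=
  fun i => if i == ord0 then P0 else 1%:M - P0.

Definition diag2 (a b : C) : 'M[C]_2 :=
  diag_mx (\row_(i < 2) if i == ord0 then a else b).

End QI.

(* Main.v *)
Require Import Defs.
From HB Require Import structures.
From mathcomp Require Import all_boot all_order all_algebra.
From mathcomp Require Import complex mxtens reals classical_sets.
From mathcomp Require Import spectral sesquilinear ring.
Import Order.TTheory GRing.Theory Num.Theory.
Local Open Scope ring_scope.

Section Help.
Variable R : realType.
Local Notation C := R[i].

Lemma adjE m n (X : 'M[C]_(m, n)) i j : adj X i j = (X j i)^*.
Proof. by rewrite /adj !mxE. Qed.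

Lemma adj_mul m n p (A : 'M[C]_(m, n)) (B : 'M[C]_(n, p)) :
  adj (A *m B) = adj B *m adj A.
Proof. by rewrite /adj trmx_mul map_mxM. Qed.

Lemma adjK m n (A : 'M[C]_(m, n)) : adj (adj A) = A.
Proof. by apply/matrixP => i j; rewrite !adjE conjCK. Qed.

Lemma formE n (v : 'cV[C]_n) (A : 'M[C]_n) :
  (adj v *m A *m v) 0 0 = \sum_y \sum_x (v x 0)^* * A x y * v y 0.
Proof.
rewrite mxE; apply: eq_bigr => y _; rewrite mxE mulr_suml.
by apply: eq_bigr => x _; rewrite adjE.
Qed.

Lemma formD n (v : 'cV[C]_n) (e : 'rV[C]_n) :
  (adj v *m diag_mx e *m v) 0 0 = \sum_y (v y 0)^* * e 0 y * v y 0.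
Proof.
rewrite -mulmxA mxE; apply: eq_bigr => y _.
by rewrite mul_diag_mx !mxE mulrA.
Qed.

Lemma sum_tens m n (F : 'I_(m * n) -> C) :
  \sum_x F x = \sum_(i < m) \sum_(j < n) F (mxtens_index (i, j)).
Proof.
have hb : {on [pred x | true], bijective (@mxtens_index m n)}.
  by exists (@mxtens_unindex m n) => x _; [apply: mxtens_indexK | apply: mxtens_unindexK].
rewrite (reindex _ hb) /= pair_bigA /=.
by apply: eq_bigr => -[i j].
Qed.

Lemma sum_delta (I : finType) (j : I) (F : I -> C) :
  \sum_i (if i == j then F i else 0) = F j.
Proof. by rewrite -big_mkcond big_pred1_eq. Qed.

Lemma sum_delta' (I : finType) (j : I) (F : I -> C) :
  \sum_i (if j == i then F i else 0) = F j.
Proof. by rewrite -(@sum_delta _ j F); apply: eq_bigr => i _; rewrite eq_sym. Qed.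

Lemma diag_sqrt n (W : 'M[C]_n) (d : 'rV[C]_n) :
  adj W = W -> (forall v : 'cV_n, 0 <= (adj v *m W *m v) 0 0) ->
  W *m W = diag_mx d -> \sum_i sqrtC (d 0 i) = \tr W.
Proof.
move=> hW hpsd hWW.
have hWc i j : W j i = (W i j)^*.
  by rewrite -{1}hW adjE.
have hd i : d 0 i = \sum_k `|W i k| ^+ 2.
  have /matrixP/(_ i i) := hWW; rewrite !mxE eqxx mulr1n => <-.
  by apply: eq_bigr => k _; rewrite normCK [W k i]hWc.
have hd0 i : 0 <= d 0 i.
  by rewrite hd; apply: sumr_ge0 => k _; apply: exprn_ge0.
pose s := \row_i sqrtC (d 0 i).
have hs0 i : 0 <= s 0 i by rewrite mxE sqrtC_ge0.
have hcd i j : W i j * d 0 j = d 0 i * W i j.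
  have /matrixP/(_ i j) : W *m (W *m W) = W *m W *m W := mulmxA W W W.
  by rewrite hWW mul_mx_diag mul_diag_mx !mxE.
have hcs i j : W i j * s 0 j = s 0 i * W i j.
  have [->|nz] := eqVneq (W i j) 0; first by rewrite mul0r mulr0.
  have : d 0 j = d 0 i.
    apply: (mulfI nz); by rewrite hcd mulrC.
  by rewrite !mxE => ->; rewrite mulrC.
pose Ds := diag_mx s.
have hcomm : W *m Ds = Ds *m W.
  by apply/matrixP => i j; rewrite mul_mx_diag mul_diag_mx !mxE; have := hcs i j; rewrite !mxE.
have hDD : Ds *m Ds = diag_mx d.
  apply/matrixP => i j; rewrite mul_diag_mx !mxE.
  by case: eqP => [->|]; rewrite ?mulr1n ?mulr0n ?mulr0 // -expr2 sqrtCK.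
pose T := W - Ds.
have hT0 : (W + Ds) *m T = 0.
  rewrite /T mulmxDl !mulmxBr hcomm hDD -hWW.
  by rewrite addrA subrK subrr.
have key j : s 0 j * `|T j j| ^+ 2 = 0.
  pose u := \col_k T k j.
  have hu : (W + Ds) *m u = 0.
    apply/matrixP => k l.
    transitivity (((W + Ds) *m T) k j); last by rewrite hT0 !mxE.
    by rewrite !mxE; apply: eq_bigr => x _; rewrite !mxE.
  have h0 : (adj u *m W *m u) 0 0 + (adj u *m Ds *m u) 0 0 = 0.
    transitivity ((adj u *m (W + Ds) *m u) 0 0).
      by rewrite mulmxDr mulmxDl [RHS]mxE.
    by rewrite -mulmxA hu mulmx0 mxE.
  have hDs : 0 <= (adj u *m Ds *m u) 0 0.
    rewrite formD; apply: sumr_ge0 => y _.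
    rewrite mulrAC [_^* * _]mulrC -normCK.
    by apply: mulr_ge0; [apply: exprn_ge0 | apply: hs0].
  have /eqP := h0; rewrite paddr_eq0 // => /andP[_ /eqP].
  rewrite formD => hsum.
  have hnn : forall y : 'I_n, true -> 0 <= (u y 0)^* * s 0 y * u y 0.
    move=> y _; rewrite mulrAC [_^* * _]mulrC -normCK.
    by apply: mulr_ge0; [apply: exprn_ge0 | apply: hs0].
  have := psumr_eq0P hnn hsum isT.
  move=> /(_ j); rewrite mulrAC [_^* * _]mulrC -normCK mulrC !mxE.
  done.
rewrite /mxtrace; apply: eq_bigr => j _.
have := key j; move/eqP; rewrite mulf_eq0 => /orP[|].
  rewrite mxE sqrtC_eq0 => /eqP dj0.
  have hnn : forall k : 'I_n, true -> 0 <= `|W j k| ^+ 2.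
    by move=> k _; apply: exprn_ge0.
  have hs : \sum_k `|W j k| ^+ 2 = 0 by rewrite -hd.
  have := psumr_eq0P hnn hs (i := j) isT.
  by move/eqP; rewrite expf_eq0 normr_eq0 /= => /eqP ->; rewrite dj0 sqrtC0.
rewrite expf_eq0 /= normr_eq0 /T !mxE eqxx mulr1n subr_eq0 => /eqP ->.
done.
Qed.

Lemma tn_sqrt m n (X : 'M[C]_(m, n)) (B : 'M[C]_n) :
  psd B -> B *m B = adj X *m X -> trace_norm X = \tr B.
Proof.
move=> [hB hBpsd] hBB.
set Q := adj X *m X.
have hQ : adj Q = Q by rewrite /Q adj_mul adjK.
have hN : Q \is normalmx.
  by apply/normalmxP; change (Q *m adj Q = adj Q *m Q); rewrite hQ.
have /orthomx_spectralP hQd := hN.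
have hU := spectral_unitarymx Q.
set P := spectralmx Q in hQd hU.
have hPP : P *m adj P = 1%:M := unitarymxP hU.
have hPP' : adj P *m P = 1%:M.
  by have := mulmxKtV 1%:M hU erefl; rewrite mul1mx.
have hinv : invmx P = adj P := invmx_unitary hU.
pose W := P *m B *m adj P.
rewrite /trace_norm -/Q; set sp := spectral_diag Q in hQd *.
rewrite (@diag_sqrt _ W).
- by rewrite /W mxtrace_mulC mulmxA hPP' mul1mx.
- by rewrite /W !adj_mul adjK hB mulmxA.
- move=> v; have := hBpsd (adj P *m v).
  by rewrite adj_mul adjK /W !mulmxA.
- rewrite /W -!mulmxA (mulmxA (adj P)) hPP' mul1mx (mulmxA B) hBB -/Q hQd hinv.
  by rewrite !mulmxA hPP mul1mx -mulmxA hPP mulmx1.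
Qed.

Lemma conj_ge0 (b : C) : 0 <= b -> b^* = b.
Proof. by move=> hb; apply: conj_Creal; apply: ger0_real. Qed.

Lemma adj_tens m n p q (A : 'M[C]_(m, n)) (B : 'M[C]_(p, q)) :
  adj (tensmx A B) = tensmx (adj A) (adj B).
Proof. by apply/matrixP => i j; rewrite !mxE rmorphM. Qed.

Lemma tr_tens m n (A : 'M[C]_m) (B : 'M[C]_n) :
  \tr (tensmx A B) = \tr A * \tr B.
Proof.
rewrite /mxtrace sum_tens mulr_suml; apply: eq_bigr => i _.
by rewrite mulr_sumr; apply: eq_bigr => j _; rewrite tensmxE.
Qed.

Lemma formT m n (v : 'cV[C]_(m * n)) (A : 'M[C]_(m * n)) :
  (adj v *m A *m v) 0 0 = \sum_j \sum_q \sum_i \sum_p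
     (v (mxtens_index (i, p)) 0)^* * A (mxtens_index (i, p)) (mxtens_index (j, q))
       * v (mxtens_index (j, q)) 0.
Proof.
rewrite formE sum_tens; apply: eq_bigr => j _; apply: eq_bigr => q _.
by rewrite sum_tens.
Qed.

Lemma psd_tens k n (b : C) (P : 'M[C]_n) : 0 <= b -> psd P ->
  psd (tensmx (b%:M : 'M_k) P).
Proof.
move=> hb [hP hPf]; split.
  rewrite adj_tens hP; congr tensmx; apply/matrixP => i j.
  by rewrite adjE !mxE eq_sym; case: (i == j); rewrite ?mulr1n ?mulr0n ?conjC0 ?conj_ge0.
move=> v; pose w j := \col_p v (mxtens_index (j, p)) 0.
have -> : (adj v *m tensmx b%:M P *m v) 0 0 =
    \sum_j b * (adj (w j) *m P *m w j) 0 0.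
  rewrite formT; apply: eq_bigr => j _; rewrite formE mulr_sumr.
  apply: eq_bigr => q _; rewrite (bigD1 j) //= [X in _ + X]big1 ?addr0 => [|i /negbTE ij].
    rewrite mulr_sumr; apply: eq_bigr => p _.
    rewrite tensmxE !mxE eqxx mulr1n !mulrA.
    by rewrite [_^* * b]mulrC.
  by apply: big1 => p _; rewrite tensmxE !mxE ij mulr0n !(mul0r, mulr0).
by apply: sumr_ge0 => j _; apply: mulr_ge0.
Qed.

Lemma mxtrace_delta n (i j : 'I_n) : \tr (delta_mx i j : 'M[C]_n) = (i == j)%:R.
Proof.
rewrite /mxtrace (bigD1 i) //= big1 => [|k /negbTE ki]; rewrite !mxE ?ki //.
by rewrite eqxx /= addr0.
Qed.

Lemma tensZl m n p q (c : C) (A : 'M[C]_(m, n)) (B : 'M[C]_(p, q)) :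
  tensmx (c *: A) B = c *: tensmx A B.
Proof. by apply/matrixP => i j; rewrite !mxE mulrA. Qed.

Lemma tensZr m n p q (c : C) (A : 'M[C]_(m, n)) (B : 'M[C]_(p, q)) :
  tensmx A (c *: B) = c *: tensmx A B.
Proof. by apply/matrixP => i j; rewrite !mxE mulrCA. Qed.

Lemma tens_sumr m n p q (A : 'M[C]_(m, n)) (I : finType) (B : I -> 'M[C]_(p, q)) :
  tensmx A (\sum_i B i) = \sum_i tensmx A (B i).
Proof.
apply/matrixP => i j; rewrite !mxE !summxE mulr_sumr.
by apply: eq_bigr => k _; rewrite mxE.
Qed.

Lemma adj_diag n (e : 'rV[C]_n) : adj (diag_mx e) = diag_mx (map_mx Num.conj e).
Proof.
apply/matrixP => i j; rewrite adjE !mxE eq_sym.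
by case: eqP => [->|_]; rewrite ?mulr1n ?mulr0n ?conjC0.
Qed.

Lemma tn_tens n (b : C) (P : 'M[C]_n) : 0 <= b -> psd P ->
  trace_norm (tensmx (diag2 b (-b)) P) = b *+ 2 * \tr P.
Proof.
move=> hb hP.
rewrite (@tn_sqrt _ _ _ (tensmx (b%:M : 'M_2) P)).
- by rewrite tr_tens mxtrace_scalar.
- exact: psd_tens.
rewrite adj_tens !tensmx_mul; case: (hP) => -> _; congr tensmx.
rewrite /diag2 adj_diag mul_diag_mx -scalar_mxM.
apply/matrixP => i j; rewrite !mxE.
case: (i == j); rewrite ?mulr0n ?mulr0 ?mulr1n //.
case: i => -[|[|//]] Hi /=; first by rewrite conj_ge0.
by rewrite raddfN /= conj_ge0 // mulrNN.
Qed.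

Lemma block_psd n (rho : 'M[C]_(n * n)) : psd rho ->
  psd (\sum_i block rho i i).
Proof.
move=> [hr hrf]; split.
  apply/matrixP => p q; rewrite adjE !summxE rmorph_sum; apply: eq_bigr => i _.
  by rewrite !mxE -[in RHS]hr adjE.
move=> v.
rewrite mulmx_sumr mulmx_suml summxE; apply: sumr_ge0 => i _.
pose u := \col_x (if (mxtens_unindex x).1 == i then v (mxtens_unindex x).2 0 else 0)
  : 'cV[C]_(n * n).
have -> : (adj v *m block rho i i *m v) 0 0 = (adj u *m rho *m u) 0 0.
  rewrite formT formE [RHS](bigD1 i) //= [X in _ + X]big1 ?addr0 => [|j /negbTE ji].
    apply: eq_bigr => q _.
    rewrite [RHS](bigD1 i) //= [X in _ + X]big1 ?addr0 => [|j /negbTE ji].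
      by apply: eq_bigr => p _; rewrite !mxE !mxtens_indexK /= eqxx.
    by apply: big1 => p _; rewrite !mxE !mxtens_indexK /= ji conjC0 !mul0r.
  apply: big1 => q _; apply: big1 => j' _; apply: big1 => p _.
  by rewrite !mxE !mxtens_indexK /= ji mulr0.
exact: hrf.
Qed.

Lemma block_tr n (rho : 'M[C]_(n * n)) : \tr (\sum_i block rho i i) = \tr rho.
Proof.
rewrite [in RHS]/mxtrace sum_tens /mxtrace exchange_big; apply: eq_bigr => p _.
by rewrite summxE; apply: eq_bigr => i _; rewrite mxE.
Qed.

Lemma psd_diag n (e : 'rV[C]_n) : (forall i, 0 <= e 0 i) -> psd (diag_mx e).
Proof.
move=> he; split.
  rewrite adj_diag; congr diag_mx; apply/matrixP => i j.
  by rewrite !mxE (ord1 i) conj_ge0.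
move=> v; rewrite formD; apply: sumr_ge0 => y _.
rewrite mulrAC [_^* * _]mulrC -normCK.
by apply: mulr_ge0; [apply: exprn_ge0 | apply: he].
Qed.

Lemma psd_diag2 (x y : C) : 0 <= x -> 0 <= y -> psd (diag2 x y).
Proof.
by move=> hx hy; apply: psd_diag => i; rewrite mxE; case: (i == ord0).
Qed.

Lemma psd1 n : psd (1%:M : 'M[C]_n).
Proof. by rewrite -diag_const_mx; apply: psd_diag => i; rewrite mxE ler01. Qed.

End Help.

Section Num.
Variable F : numFieldType.
Lemma n10 : (10 : F) != 0. Proof. by rewrite pnatr_eq0. Qed.
Lemma n2 : (2 : F) != 0. Proof. by rewrite pnatr_eq0. Qed.
Lemma num1 : (9 / 10 : F) - 5 / 10 = 4 / 10.
Proof. by rewrite -mulrBl -natrB. Qed.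
Lemma num2 : (6 / 10 : F) - 2 / 10 = 4 / 10.
Proof. by rewrite -mulrBl -natrB. Qed.
Lemma num3 : (4 / 10 : F) / 2 *+ 2 * 2%:R = 8 / 10.
Proof. by rewrite mulr2n; field; rewrite ?n10 ?n2. Qed.
Lemma num4 : (4 / 10 : F) *+ 2 * 1 = 8 / 10.
Proof. by rewrite mulr2n; field; rewrite ?n10 ?n2. Qed.
Lemma num5 : (1 - 9 / 10 : F) = 1 / 10.
Proof. by field; rewrite ?n10 ?n2. Qed.
Lemma num6 : (1 - 6 / 10 : F) = 4 / 10.
Proof. by field; rewrite ?n10 ?n2. Qed.
Lemma num7 : (1 - 5 / 10 : F) = 5 / 10.
Proof. by field; rewrite ?n10 ?n2. Qed.
Lemma num8 : (1 - 2 / 10 : F) = 8 / 10.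
Proof. by field; rewrite ?n10 ?n2. Qed.
Lemma numpos (k : nat) : 0 <= (k%:R / 10 : F).
Proof. by rewrite divr_ge0 ?ler0n. Qed.
End Num.

Section Main.
Variable R : realType.
Local Notation C := R[i].

Let a : C := 4 / 10.
Let M := povm2 (diag2 (9 / 10 : C) (6 / 10)).
Let N := povm2 (diag2 (5 / 10 : C) (2 / 10)).
Let Delta := fun rho => meas_channel M rho - meas_channel N rho.

Lemma a_ge0 : 0 <= a. Proof. exact: numpos. Qed.

Lemma MN0 : M ord0 - N ord0 = a%:M.
Proof.
rewrite /M /N /povm2 eqxx /diag2; apply/matrixP => i j; rewrite !mxE.
case: (i == j); rewrite ?mulr0n ?subrr // !mulr1n.
by case: (i == ord0); rewrite ?num1 ?num2.
Qed.

Lemma MN1 : M ord_max - N ord_max = (- a)%:M.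
Proof.
have := MN0; rewrite /M /N /povm2 (_ : (ord_max == ord0 :> 'I_2) = false) // => h.
rewrite opprB addrC addrA subrK -opprB h.
by apply/matrixP => i j; rewrite !mxE mulNrn.
Qed.


Lemma hDelta r : Delta r = \tr r *: diag2 a (- a).
Proof.
apply/matrixP => i j; rewrite /Delta /meas_channel /diag2 !mxE.
case: (i == j); rewrite ?mulr0n ?subrr ?mulr0 // !mulr1n.
rewrite -raddfB -mulmxBr.
have [->|->] : i = ord0 \/ i = ord_max.
  by case: i => -[|[|//]] Hi; [left|right]; apply: val_inj.
  by rewrite eqxx MN0 mul_mx_scalar; change (\tr (a *: r) = \tr r * a); rewrite mxtraceZ mulrC.
by rewrite (_ : (ord_max == ord0 :> 'I_2) = false) // MN1 mul_mx_scalar; change (\tr ((- a) *: r) = \tr r * - a); rewrite mxtraceZ mulrC.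
Qed.

Lemma hchoi : choi Delta = tensmx (diag2 a (- a)) (1%:M : 'M_2).
Proof.
transitivity (tensmx (diag2 a (- a))
   (\sum_i \sum_j \tr (delta_mx i j : 'M[C]_2) *: (delta_mx i j : 'M[C]_2))).
  rewrite /choi tens_sumr; apply: eq_bigr => i _; rewrite tens_sumr.
  by apply: eq_bigr => j _; rewrite hDelta tensZl tensZr.
congr tensmx; rewrite [RHS]matrix_sum_delta; apply: eq_bigr => i _.
by apply: eq_bigr => j _; rewrite mxtrace_delta mxE.
Qed.

Lemma hext rho : ext_id Delta rho = tensmx (diag2 a (- a)) (\sum_i block rho i i).
Proof.
transitivity (tensmx (diag2 a (- a))
   (\sum_i \sum_j \tr (delta_mx i j : 'M[C]_2) *: block rho i j)).
  rewrite /ext_id tens_sumr; apply: eq_bigr => i _; rewrite tens_sumr.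
  by apply: eq_bigr => j _; rewrite hDelta tensZl tensZr.
congr tensmx; apply: eq_bigr => i _.
rewrite (bigD1 i) //= [X in _ + X]big1 ?addr0 => [|j /negbTE ji].
  by rewrite mxtrace_delta eqxx scale1r.
by rewrite mxtrace_delta eq_sym ji scale0r.
Qed.

Lemma C8 : Complex (8 / 10 : R) 0 = 8 / 10 :> C.
Proof.
by rewrite -[Complex _ _]/((8/10)%:C)%C rmorphM fmorphV !rmorph_nat.
Qed.

Lemma tn_ext rho : density rho -> trace_norm (ext_id Delta rho) = 8 / 10.
Proof.
move=> [hp ht]; rewrite hext tn_tens ?a_ge0; last exact: block_psd.
have := @block_tr R 2 rho; rewrite ht => ->; first exact: num4.
all: done.
Qed.

Lemma hme : me_norm Delta = 8 / 10.
Proof.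
rewrite /me_norm hchoi -tensZl.
rewrite (_ : _ *: diag2 a (- a) = diag2 (a / 2) (- (a / 2))).
  rewrite tn_tens; last exact: psd1.
    by move: (num3 C); rewrite -(mxtrace1 C 2).
  by rewrite divr_ge0 ?a_ge0 ?ler0n.
apply/matrixP => i j; rewrite /diag2 !mxE.
case: (i == j); rewrite ?mulr0n ?mulr0 // !mulr1n.
by case: (i == ord0); rewrite mulrC // mulNr.
Qed.

Lemma one_sub_diag2 (x y : C) : 1%:M - diag2 x y = diag2 (1 - x) (1 - y).
Proof.
apply/matrixP => i j; rewrite /diag2 !mxE.
case: (i == j); rewrite ?mulr0n ?subrr // !mulr1n.
by case: (i == ord0).
Qed.

Lemma ordmax_neq : (ord_max == ord0 :> 'I_2) = false.
Proof. by []. Qed.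

Lemma povm2P (x y : C) : 0 <= x -> 0 <= y -> 0 <= 1 - x -> 0 <= 1 - y ->
  povm (povm2 (diag2 x y)).
Proof.
move=> hx hy hx' hy'; split.
  move=> i; have [->|->] : i = ord0 \/ i = ord_max.
      by case: i => -[|[|//]] Hi; [left|right]; apply: val_inj.
    by rewrite /povm2 eqxx; apply: psd_diag2.
  by rewrite /povm2 ordmax_neq one_sub_diag2; apply: psd_diag2.
rewrite big_ord_recl big_ord1 /povm2 eqxx.
by rewrite (_ : (lift ord0 ord0 == ord0 :> 'I_2) = false) // addrC subrK.
Qed.

Lemma mebc : MEBC M N.
Proof.
rewrite /MEBC; change (me_norm Delta = Complex (diamond_norm Delta) 0).
rewrite hme -C8; congr Complex.
rewrite /diamond_norm (_ : [set x | _]%classic = [set (8 / 10 : R)]%classic) ?sup1 //.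
apply/seteqP; split => x /=.
  by case=> rho [hd]; rewrite tn_ext // -C8 => -[->].
move=> ->.
pose rho0 := diag_mx (delta_mx 0 (ord0 : 'I_(2 * 2)) : 'rV[C]_(2 * 2)).
have hd0 : density rho0.
  split.
    by apply: psd_diag => i; rewrite mxE ler0n.
  rewrite mxtrace_diag (bigD1 ord0) //= big1 => [|j /negbTE hj].
    by rewrite !mxE !eqxx addr0.
  by rewrite !mxE hj andbF.
by exists rho0; split; rewrite ?tn_ext ?C8.
Qed.

Lemma main_all :
  [/\ povm M /\ povm N,
      M ord0 *m N ord0 = N ord0 *m M ord0,
      M ord_max *m N ord_max = N ord_max *m M ord_max,
      M ord0 - N ord0 = (4 / 10 : R[i])%:M
    & MEBC M N].
Proof.
split.
- split; apply: povm2P; rewrite ?num5 ?num6 ?num7 ?num8; by rewrite divr_ge0 ?ler0n ?ler01.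
- by rewrite /M /N /povm2 eqxx /diag2 diag_mxC.
- by rewrite /M /N /povm2 ordmax_neq !one_sub_diag2 /diag2 diag_mxC.
- exact: MN0.
- exact: mebc.
Qed.

End Main.

Theorem corollary4 (R : realType) :
  let M := povm2 (diag2 (9 / 10 : R[i]) (6 / 10)) in
  let N := povm2 (diag2 (5 / 10 : R[i]) (2 / 10)) in
  [/\ povm M /\ povm N,
      M ord0 *m N ord0 = N ord0 *m M ord0,
      M ord_max *m N ord_max = N ord_max *m M ord_max,
      M ord0 - N ord0 = (4 / 10 : R[i])%:M
    & MEBC M N].
Proof. move=> M N; exact: (main_all R). Qed.
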